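(* Let $a,b,c,d$ be nonnegative integers and let $\kappa,\lambda\subseteq\Box_{a+c,b+d}$ be partitions with $\ell(\kappa)\le a$ and $\lambda_1\le b$. Work in the cohomology ring of $G(a+c,b+d)$. (1) If $|\kappa|+|\lambda|>ad+ab+cb$, then $\sigma_\kappa\cdot\sigma_\lambda=0$. (2) If $|\kappa|+|\lambda|=ad+ab+cb$ and $\sigma_\kappa\cdot\sigma_\lambda\neq0$, then $\sigma_\kappa\cdot\sigma_\lambda=\sigma_{\Box_{c,d}^\vee}$, where $\Box_{c,d}^\vee$ is the complement of $\Box_{c,d}$ in $\Box_{a+c,b+d}$ (the partition with $a$ parts equal to $b+d$ followed by $c$ parts equal to $b$), and there is a partition $\alpha\subseteq\Box_{a,b}$ such that $\kappa=\Box_{a,d}+\alpha$ and $\lambda=(\Box_{c,b},\alpha^\vee)$, where $\alpha^\vee$ is the complement of $\alpha$ in $\Box_{a,b}$.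
   Context: Partitions: weakly decreasing finite sequences of positive integers $\lambda_1\ge\dots\ge\lambda_k>0$, with $\lambda_i:=0$ for $i>k$, $\ell(\lambda)=k$, $|\lambda|=\sum\lambda_i$; $\lambda\subseteq\mu$ means $\lambda_i\le\mu_i$ for all $i$. $\Box_{a,b}$ is the partition with $a$ parts equal to $b$. $\mu+\nu$ has $k$-th part $\mu_k+\nu_k$; $(\mu,\nu)$ is the decreasing rearrangement of the concatenated parts of $\mu$ and $\nu$. For $\lambda\subseteq\Box_{a,b}$, its complement in $\Box_{a,b}$ is the partition $\lambda^\vee\subseteq\Box_{a,b}$ with $\lambda^\vee_i=b-\lambda_{a+1-i}$ for $i=1,\dots,a$. $G(a,b)$ is the Grassmannian of $a$-dimensional subspaces of $\mathbb{C}^{a+b}$. Its cohomology ring has $\mathbb{Z}$-basis the Schubert classes $\sigma_\lambda$, $\lambda\subseteq\Box_{a,b}$ (the class of the Schubert variety $\Omega_\lambda F_\bullet=\{H: \dim H\cap F_{b+i-\lambda_i}\ge i,\ i=1,\dots,a\}$ for a complete flag $F_\bullet$); the map from symmetric functions sending the Schur function $S_\lambda$ to $\sigma_\lambda$ if $\lambda\subseteq\Box_{a,b}$ and to $0$ otherwise is a surjective ring homomorphism, so products of Schubert classes are computed by Littlewood-Richardson coefficients, discarding partitions not contained in $\Box_{a,b}$. $\sigma_{\Box_{a,b}}$ is the class of a point. *)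

(* Defs.v *)
From mathcomp Require Import all_boot.
Set Implicit Arguments. Unset Strict Implicit. Unset Printing Implicit Defensive.

(** Partitions are represented as [seq nat]: weakly decreasing, all parts > 0.
    [nth 0 l i] is the (i+1)-th part (so parts beyond the length are 0). *)
Definition is_partition (l : seq nat) : bool :=
  sorted (fun x y => y <= x) l && all (fun x => 0 < x) l.

Definition psize (l : seq nat) : nat := sumn l.

Definition subpart (l m : seq nat) : bool :=
  all (fun i => nth 0 l i <= nth 0 m i) (iota 0 (maxn (size l) (size m))).

Definition box (a b : nat) : seq nat := if b is 0 then [::] else nseq a b.

Definition compl (a b : nat) (l : seq nat) : seq nat :=
  [seq x <- [seq b - nth 0 l (a - 1 - i) | i <- iota 0 a] | 0 < x].

Definition padd (m n : seq nat) : seq nat :=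
  mkseq (fun i => nth 0 m i + nth 0 n i) (maxn (size m) (size n)).

Definition pcat (m n : seq nat) : seq nat := sort (fun x y => y <= x) (m ++ n).

(** A filling T of the skew shape nu/lam is a list of rows; row i (0-based) fills
    the cells (i, j) with lam_i <= j < nu_i, left to right. *)

Definition entry (lam : seq nat) (T : seq (seq nat)) (i j : nat) : nat :=
  nth 0 (nth [::] T i) (j - nth 0 lam i).

Definition reading_word (T : seq (seq nat)) : seq nat := flatten (map rev T).

Definition lattice_word (n : nat) (w : seq nat) : bool :=
  all (fun p => all (fun k => count_mem k.+2 (take p w) <= count_mem k.+1 (take p w))
                    (iota 0 n))
      (iota 0 (size w).+1).

Definition LR_tableau (lam mu nu : seq nat) (T : seq (seq nat)) : bool :=
  [&& subpart lam nu,
      size T == size nu,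
      all (fun i => size (nth [::] T i) == nth 0 nu i - nth 0 lam i) (iota 0 (size nu)),
      all (sorted leq) T,
      (* columns strictly increasing *)
      all (fun i => all (fun j => (nth 0 lam i <= j) ==> (nth 0 lam i.+1 <= j) ==>
                                   (entry lam T i j < entry lam T i.+1 j))
                        (iota 0 (nth 0 nu i.+1)))
          (iota 0 (size nu).-1),
      0 \notin flatten T,
      all (fun k => count_mem k.+1 (flatten T) == nth 0 mu k)
          (iota 0 (maxn (size mu) (foldr maxn 0 (flatten T)))) &
      lattice_word (foldr maxn 0 (flatten T)) (reading_word T)].

Fixpoint words (k n : nat) : seq (seq nat) :=
  if k is k'.+1 then [seq x :: w | x <- iota 1 n, w <- words k' n] else [:: [::]].

Fixpoint fillings (rs : seq nat) (n : nat) : seq (seq (seq nat)) :=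
  if rs is r :: rs' then [seq w :: T | w <- words r n, T <- fillings rs' n]
  else [:: [::]].

Definition LRcoef (lam mu nu : seq nat) : nat :=
  if subpart lam nu then
    count (LR_tableau lam mu nu)
      (fillings [seq nth 0 nu i - nth 0 lam i | i <- iota 0 (size nu)] (size mu))
  else 0.

(** ---- Cohomology of G(n,m) in the Schubert basis sigma_nu, nu ⊆ Box_{n,m}.
    An element is represented by its coefficient function on partitions. *)

Definition sigma (n m : nat) (mu : seq nat) (nu : seq nat) : nat :=
  [&& nu == mu & subpart mu (box n m)].

(** coefficient of sigma_nu in sigma_kap . sigma_lam: the LR coefficient,
    discarding partitions not contained in Box_{n,m}. *)
Definition cup (n m : nat) (kap lam : seq nat) (nu : seq nat) : nat :=
  if is_partition nu && subpart nu (box n m) then LRcoef kap lam nu else 0.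

(* Main.v *)
Require Import Defs.
From mathcomp Require Import all_boot.
From mathcomp Require Import zify.
Set Implicit Arguments. Unset Strict Implicit. Unset Printing Implicit Defensive.

Lemma geq_trans : transitive (fun x y : nat => y <= x).
Proof. move=> y x z h1 h2; exact: leq_trans h2 h1. Qed.

Lemma pos_nth_eq (l1 l2 : seq nat) : all (fun x => 0 < x) l1 -> all (fun x => 0 < x) l2 ->
  (forall i, nth 0 l1 i = nth 0 l2 i) -> l1 = l2.
Proof.
elim: l1 l2 => [|x l1 IH] [|y l2] //=.
- move=> _ /andP[hy _] h; move: (h 0) => /= h0; by rewrite -h0 in hy.
- move=> /andP[hx _] _ h; move: (h 0) => /= h0; by rewrite h0 in hx.
- move=> /andP[hx h1] /andP[hy h2] h. have /= -> := h 0. by rewrite (IH l2 h1 h2) // => i; exact: (h i.+1).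
Qed.

Lemma subpartP l m : reflect (forall i, nth 0 l i <= nth 0 m i) (subpart l m).
Proof.
apply: (iffP allP) => h i.
- case: (ltnP i (maxn (size l) (size m))) => hi.
  + apply: h; by rewrite mem_iota.
  + rewrite nth_default //; apply: leq_trans hi; exact: leq_maxl.
- move=> _; exact: h.
Qed.

Lemma nth_box n m i : nth 0 (box n m) i = if i < n then m else 0.
Proof. case: m => [|m] /=; first by rewrite nth_nil; case: ifP. by rewrite nth_nseq. Qed.

Lemma size_box n m : size (box n m) <= n.
Proof. case: m => [|m] //=; by rewrite size_nseq. Qed.

Lemma nth_all (P : pred nat) s i : all P s -> P 0 -> P (nth 0 s i).
Proof.
move=> /allP h h0; case: (ltnP i (size s)) => hi; [apply: h; exact: mem_nth | by rewrite nth_default].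
Qed.

Lemma all_pos_nth (s : seq nat) : (forall i, i < size s -> 0 < nth 0 s i) -> all (fun x => 0 < x) s.
Proof.
move=> h; apply/allP => x /(nthP 0) [i hi <-]; exact: h.
Qed.

Lemma pos_size (s : seq nat) i : all (fun x => 0 < x) s -> (i < size s) = (0 < nth 0 s i).
Proof.
move=> /allP h; case: (ltnP i (size s)) => hi.
- by rewrite h // mem_nth.
- by rewrite nth_default.
Qed.

Lemma sorted_nth_geq (s : seq nat) : (forall k, nth 0 s k.+1 <= nth 0 s k) -> sorted (fun x y => y <= x) s.
Proof. move=> h; apply/(sortedP 0) => k _; exact: h. Qed.

Lemma part_mono (l : seq nat) i j : sorted (fun x y => y <= x) l -> i <= j -> nth 0 l j <= nth 0 l i.
Proof.
move=> hs hij; case: (ltnP j (size l)) => hj.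
- apply: (sorted_leq_nth geq_trans _ 0 hs) => //; rewrite inE //; exact: leq_ltn_trans hj.
- by rewrite (nth_default 0 hj).
Qed.

Lemma nth_filter_pos (s : seq nat) i : sorted (fun x y => y <= x) s ->
  nth 0 [seq x <- s | 0 < x] i = nth 0 s i.
Proof.
elim: s i => [|x s IH] i //= hs.
have hs' := path_sorted hs.
case: (posnP x) => [x0|xpos].
- have hall : all (fun y => y <= x) s by apply: (order_path_min geq_trans hs).
  rewrite x0 in hall; rewrite x0 /= IH //.
  have z k : nth 0 s k = 0 by apply/eqP; rewrite -leqn0; apply: (nth_all (P := fun y => y <= 0)).
  by case: i => [|j] /=; rewrite ?z.
- case: i => [|j] //=; exact: IH.
Qed.

Lemma size_le (l m : seq nat) : all (fun x => 0 < x) l -> subpart l m -> size l <= size m.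
Proof.
move=> hl /subpartP hs; case: (leqP (size l) (size m)) => // h.
have := hs (size m); rewrite (nth_default 0 (leqnn _)).
have : 0 < nth 0 l (size m) by rewrite -(pos_size _ hl).
lia.
Qed.

Lemma sum_eq_termwise (r : seq nat) (f g : nat -> nat) :
  (forall k, f k <= g k) -> \sum_(k <- r) f k = \sum_(k <- r) g k ->
  forall k, k \in r -> f k = g k.
Proof.
move=> hle; elim: r => [|x r IH] //; rewrite !big_cons => heq k.
have hx := hle x.
have hs : \sum_(k <- r) f k <= \sum_(k <- r) g k by apply: leq_sum.
rewrite in_cons => /orP[/eqP->|hk]; first lia.
apply: IH => //; lia.
Qed.

Lemma sumn_nth (s : seq nat) n : size s <= n -> sumn s = \sum_(0 <= i < n) nth 0 s i.
Proof.
elim: s n => [|x s IH] n /=.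
- move=> _; rewrite big1 // => i _; by rewrite nth_nil.
- case: n => [|n] // h; rewrite big_nat_recl // (IH n) //.
Qed.

Lemma count_ind (x K : nat) : \sum_(0 <= k < K) (x == k.+1) = (0 < x <= K).
Proof.
elim: K => [|K IH]; first by rewrite big_geq //; case: x.
rewrite big_nat_recr //= IH.
case: (x =P K.+1) => [->|hne].
- by rewrite ltnn andbF leqnn.
- rewrite addn0; congr (nat_of_bool _); apply/andP/andP; case=> h1 h2; split=> //; lia.
Qed.

Lemma sum_count (s : seq nat) K : (forall x, x \in s -> 0 < x <= K) ->
  \sum_(0 <= k < K) count_mem k.+1 s = size s.
Proof.
elim: s => [|x s IH] h /=.
- by rewrite big1.
- rewrite big_split /= IH; last by move=> y hy; apply: h; rewrite in_cons hy orbT.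
  rewrite (eq_bigr (fun k => nat_of_bool (x == k.+1))); last by move=> k _; rewrite eq_sym.
  by rewrite count_ind h ?mem_head.
Qed.

Lemma maxP (s : seq nat) x : x \in s -> x <= foldr maxn 0 s.
Proof.
elim: s => [|y s IH] //=; rewrite in_cons => /orP[/eqP->|h]; first exact: leq_maxl.
apply: leq_trans (IH h) _; exact: leq_maxr.
Qed.

Definition P (T : seq (seq nat)) i v := count_mem v (flatten (take i T)).
Definition MT (T : seq (seq nat)) := foldr maxn 0 (flatten T).


Lemma flat_rev_perm (S : seq (seq nat)) : perm_eq (flatten (map rev S)) (flatten S).
Proof. elim: S => [|r S IH] //=; apply: perm_cat => //; by rewrite perm_rev. Qed.

Lemma take_count_sorted (s : seq nat) t : sorted (fun x y => y <= x) s ->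
  take (count (fun x => t < x) s) s = [seq x <- s | t < x].
Proof.
elim: s => [|x s IH] //= hs.
have hs' := path_sorted hs.
case: ifP => hx /=.
- by rewrite add0n IH.
- have hall := order_path_min geq_trans hs.
  have hp : {in s, (fun x => t < x) =1 pred0}.
    move=> y hy /=; move/allP: hall => /(_ y hy) hy'; apply/negbTE; move: hx; lia.
  by rewrite add0n (eq_in_count hp) (eq_in_filter hp) count_pred0 filter_pred0 take0.
Qed.


Lemma sorted_count1 (r : seq nat) g : sorted leq r -> all (fun x => 0 < x) r -> g < size r ->
  1 < nth 0 r g -> count_mem 1 r <= g.
Proof.
elim: r g => [|x r IH] g //= hs /andP[hx hall] hg hn.
have hs' := path_sorted hs.
case: g hg hn => [|g] /= hg hn.
- have hmin := order_path_min leq_trans hs.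
  have hp : {in r, pred1 1 =1 pred0}.
    move=> y hy /=; move/allP: hmin => /(_ y hy) hy'; apply/negbTE; apply/eqP => h1; lia.
  rewrite (eq_in_count hp) count_pred0; move: hn; case: eqP => //; lia.
- have := IH g hs' hall hg hn; case: (x == 1) => /=; lia.
Qed.

Section LR.
Variables (kap lam nu : seq nat) (T : seq (seq nat)).
Hypothesis hLR : LR_tableau kap lam nu T.

Lemma LR_sub : subpart kap nu.
Proof. by case/and5P: hLR. Qed.
Lemma LR_size : size T = size nu.
Proof. by case/and5P: hLR => _ /eqP. Qed.
Lemma LR_rows i : i < size nu -> size (nth [::] T i) = nth 0 nu i - nth 0 kap i.
Proof. case/and5P: hLR => _ _ /allP h _ _ hi; apply/eqP; apply: h; by rewrite mem_iota. Qed.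
Lemma LR_sorted i : sorted leq (nth [::] T i).
Proof.
case/and5P: hLR => _ _ _ /allP h _; case: (ltnP i (size T)) => hi.
- apply: h; exact: mem_nth.
- by rewrite nth_default.
Qed.
Lemma LR_col i j : i.+1 < size nu -> j < nth 0 nu i.+1 -> nth 0 kap i <= j -> nth 0 kap i.+1 <= j ->
  entry kap T i j < entry kap T i.+1 j.
Proof.
case/and5P: hLR => _ _ _ _ /and4P[/allP h _ _ _] hi hj h1 h2.
have := h i; rewrite mem_iota /= => /(_ _)/allP; move/(_ _)/(_ j).
rewrite mem_iota /= h1 h2 /=; apply => //; lia.
Qed.
Lemma LR_pos : 0 \notin flatten T.
Proof. by case/and5P: hLR => _ _ _ _ /and4P[]. Qed.
Lemma LR_lat : lattice_word (MT T) (reading_word T).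
Proof. by case/and5P: hLR => _ _ _ _ /and4P[]. Qed.

Lemma LR_entries x : x \in flatten T -> 0 < x <= MT T.
Proof.
move=> hx; rewrite maxP // andbT lt0n; apply/negP => /eqP h0.
by move: LR_pos; rewrite -h0 hx.
Qed.

Lemma LR_content k : count_mem k.+1 (flatten T) = nth 0 lam k.
Proof.
case/and5P: hLR => _ _ _ _ /and4P[_ _ /allP h _].
case: (ltnP k (maxn (size lam) (MT T))) => hk.
- apply/eqP; apply: h; by rewrite mem_iota.
- rewrite nth_default; last by apply: leq_trans hk; exact: leq_maxl.
  apply/count_memPn/negP => /LR_entries; move: hk; rewrite geq_max; lia.
Qed.


Lemma P_succ i v : i < size T -> P T i.+1 v = P T i v + count_mem v (nth [::] T i).
Proof. move=> hi; by rewrite /P (take_nth [::]) // flatten_rcons count_cat. Qed.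

Lemma P_full v : P T (size T) v = count_mem v (flatten T).
Proof. by rewrite /P take_size. Qed.

Lemma mem_prefix i x : x \in flatten (take i T) -> x \in flatten T.
Proof. by rewrite -{2}(cat_take_drop i T) flatten_cat mem_cat => ->. Qed.

Lemma P_le_total i v : P T i v <= count_mem v (flatten T).
Proof. by rewrite /P -{2}(cat_take_drop i T) flatten_cat count_cat leq_addr. Qed.

Lemma P_big i v : MT T < v -> P T i v = 0.
Proof.
move=> hv; apply/count_memPn/negP => /mem_prefix /LR_entries; lia.
Qed.

Lemma P_zero i : P T i 0 = 0.
Proof. apply/count_memPn/negP => /mem_prefix h; by move: LR_pos; rewrite h. Qed.

Lemma lattice_gen p v : 0 < v ->
  count_mem v.+1 (take p (reading_word T)) <= count_mem v (take p (reading_word T)).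
Proof.
move=> hv; set w := reading_word T.
have key : forall p, p <= size w -> count_mem v.+1 (take p w) <= count_mem v (take p w).
  move=> q hq; move: LR_lat => /allP/(_ q); rewrite mem_iota /= ltnS hq => /(_ isT) /allP h.
  case: (ltnP v.-1 (MT T)) => hvM.
  - have := h v.-1; rewrite mem_iota /= hvM prednK //; apply => //.
  - have -> : count_mem v.+1 (take q w) = 0 => //.
    apply/count_memPn/negP => /mem_take.
    rewrite /w (perm_mem (flat_rev_perm T)) => /LR_entries; lia.
case: (leqP p (size w)) => hp; first exact: key.
rewrite take_oversize; last exact: ltnW.
by have := key _ (leqnn _); rewrite take_size.
Qed.

Lemma A_count i x : count_mem x (flatten (map rev (take i T))) = P T i x.
Proof. by rewrite /P (permP (flat_rev_perm _)). Qed.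

Lemma strip i v : i < size T -> 0 < v -> P T i.+1 v.+1 <= P T i v.
Proof.
move=> hi hv.
set row := nth [::] T i.
set A := flatten (map rev (take i T)).
set q := count (fun x => v < x) (rev row).
have hw : reading_word T = A ++ (rev row ++ flatten (map rev (drop i.+1 T))).
  by rewrite /reading_word -{1}(cat_take_drop i T) map_cat flatten_cat (drop_nth [::] hi).
have hsr : sorted (fun x y => y <= x) (rev row) by rewrite rev_sorted; exact: LR_sorted.
have ht : take (size A + q) (reading_word T) = A ++ [seq x <- rev row | v < x].
  rewrite hw take_cat ltnNge leq_addr /= addKn takel_cat; last by rewrite /q count_size.
  by rewrite /q take_count_sorted.
have := lattice_gen (size A + q) hv; rewrite ht !count_cat !count_filter.
rewrite (@eq_count _ (predI (pred1 v.+1) (fun x => v < x)) (pred1 v.+1)); last by move=> x /=; rewrite andb_idr // => /eqP ->.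
rewrite (@eq_count _ (predI (pred1 v) (fun x => v < x)) pred0); last by move=> x /=; apply/negbTE/negP => /andP[/eqP ->]; rewrite ltnn.
rewrite count_pred0 addn0 count_rev !A_count P_succ //.
Qed.

Lemma row_core i : i < size T ->
  size (nth [::] T i) <= P T i.+1 1 /\
  (P T i.+1 1 <= size (nth [::] T i) ->
     P T i.+1 1 = size (nth [::] T i) /\ forall v, 0 < v -> P T i.+1 v.+1 = P T i v).
Proof.
move=> hi; set M := MT T.
have hsz : forall j, \sum_(0 <= k < M.+1) P T j k.+1 = size (flatten (take j T)).
  move=> j; apply: sum_count => x hx; have := LR_entries (mem_prefix hx); rewrite -/M; lia.
have hstep : size (flatten (take i.+1 T)) = size (flatten (take i T)) + size (nth [::] T i).
  by rewrite (take_nth [::] hi) flatten_rcons size_cat.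
have e1 : \sum_(0 <= k < M.+1) P T i.+1 k.+1 = P T i.+1 1 + \sum_(0 <= k < M) P T i.+1 k.+2.
  by rewrite big_nat_recl.
have e0 : \sum_(0 <= k < M.+1) P T i k.+1 = \sum_(0 <= k < M) P T i k.+1.
  by rewrite big_nat_recr //= P_big ?addn0.
have hle : forall k, P T i.+1 k.+2 <= P T i k.+1 by move=> k; apply: strip.
have hS : \sum_(0<=k<M) P T i.+1 k.+2 <= \sum_(0<=k<M) P T i k.+1 by apply: leq_sum.
have h1 := hsz i.+1; have h0 := hsz i.
split; first lia.
move=> hX; split; first lia.
move=> v hv.
have heq : \sum_(0<=k<M) P T i.+1 k.+2 = \sum_(0<=k<M) P T i k.+1 by lia.
case: (ltnP v.-1 M) => hvM.
- have := sum_eq_termwise hle heq (k := v.-1); rewrite mem_index_iota /= hvM prednK //; apply => //.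
- rewrite !P_big //; rewrite -/M; lia.
Qed.

Lemma formula : (forall i, i < size T -> P T i.+1 1 <= size (nth [::] T i)) ->
  forall i, i <= size T -> forall v,
    P T i v = if (0 < v) && (v <= i) then size (nth [::] T (i - v)) else 0.
Proof.
move=> hH; elim=> [|i IH] hi v.
- rewrite /P take0 /=; by case: v.
- have hi' : i < size T by [].
  have [_ /(_ (hH i hi')) [hX hrec]] := row_core hi'.
  case: v => [|[|w]].
  + by rewrite P_zero.
  + by rewrite hX /= subn1.
  + rewrite hrec // IH; last exact: ltnW.
    by rewrite /= subSS.
Qed.

Lemma row_pos i x : x \in nth [::] T i -> 0 < x.
Proof.
case: (ltnP i (size T)) => hi; last by rewrite nth_default.
move=> hx; have : x \in flatten T by apply/flattenP; exists (nth [::] T i) => //; exact: mem_nth.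
by move/LR_entries => /andP[].
Qed.

Lemma ones_bound : is_partition kap -> is_partition nu ->
  forall i, i < size nu -> P T i.+1 1 <= nth 0 nu 0 - nth 0 kap i.
Proof.
move=> /andP[hk _] /andP[hn _]; have /subpartP hsub := LR_sub.
elim=> [|i IH] hi.
- rewrite P_succ ?LR_size // /P take0 /= -(LR_rows hi); exact: count_size.
- have hi' : i < size nu by lia.
  rewrite P_succ ?LR_size //; have := IH hi'.
  have hk1 : nth 0 kap i.+1 <= nth 0 kap i by apply: part_mono.
  have hn1 : nth 0 nu i.+1 <= nth 0 nu i by apply: part_mono.
  have hn0 : nth 0 nu i <= nth 0 nu 0 by apply: part_mono.
  have hki := hsub i.
  suff : count_mem 1 (nth [::] T i.+1) <= nth 0 kap i - nth 0 kap i.+1 by lia.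
  set r := nth [::] T i.+1; set g := nth 0 kap i - nth 0 kap i.+1.
  have hr : size r = nth 0 nu i.+1 - nth 0 kap i.+1 by rewrite /r LR_rows.
  case: (ltnP g (size r)) => hg; last by apply: leq_trans (count_size _ _) hg.
  have hg2 := hg; apply: sorted_count1 hg _; first exact: LR_sorted.
  + by apply/allP => x; apply: row_pos.
  + have hj : nth 0 kap i < nth 0 nu i.+1 by move: hg2; rewrite hr /g; lia.
    have := LR_col hi hj (leqnn _) hk1.
    rewrite /entry subnn -/r.
    have -> : nth 0 kap i - nth 0 kap i.+1 = g by [].
    set r0 := nth [::] T i.
    have hr0 : 0 < size r0 by rewrite /r0 LR_rows //; lia.
    have : 0 < nth 0 r0 0 by apply: (row_pos (i := i)); exact: mem_nth.
    lia.
Qed.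

Lemma row_bound i : nth 0 nu i - nth 0 kap i <= nth 0 lam 0.
Proof.
case: (ltnP i (size nu)) => hi; last by rewrite (nth_default 0 hi).
rewrite -(LR_rows hi) -LR_content.
have hi' : i < size T by rewrite LR_size.
have [h _] := row_core hi'.
apply: leq_trans h _; exact: P_le_total.
Qed.

Lemma sum_sizes : is_partition kap -> sumn nu = sumn kap + sumn lam.
Proof.
move=> /andP[_ hkp].
have /subpartP hsub := LR_sub.
have hks : size kap <= size nu by apply: size_le => //; exact: LR_sub.
set K := maxn (size lam) (MT T).
have hlam : sumn lam = size (flatten T).
  rewrite (sumn_nth (n := K)) ?leq_maxl //.
  rewrite -(sum_count (s := flatten T) (K := K)); last first.
    move=> x /LR_entries; rewrite /K; lia.
  by apply: eq_bigr => k _; rewrite LR_content.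
have hT : size (flatten T) = \sum_(0 <= i < size nu) (nth 0 nu i - nth 0 kap i).
  rewrite size_flatten (sumn_nth (n := size nu)); last by rewrite size_map LR_size.
  apply: eq_big_nat => i /andP[_ hi].
  by rewrite (nth_map [::]) ?LR_size // LR_rows.
have hsplit : \sum_(0 <= i < size nu) (nth 0 nu i - nth 0 kap i) + \sum_(0 <= i < size nu) nth 0 kap i
   = \sum_(0 <= i < size nu) nth 0 nu i.
  rewrite -big_split /=; apply: eq_bigr => i _; by rewrite subnK.
rewrite (sumn_nth (n := size nu) (s := nu)) // (sumn_nth (n := size nu) (s := kap)) //.
lia.
Qed.

End LR.

Definition U a b c d i := if i < a then b + d else if i < a + c then b else 0.

Lemma nth_compl_raw n m l k :
  nth 0 [seq m - nth 0 l (n - 1 - i) | i <- iota 0 n] k = if k < n then m - nth 0 l (n - 1 - k) else 0.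
Proof.
case: ltnP => h.
- by rewrite (nth_map 0) ?size_iota // nth_iota.
- by rewrite nth_default // size_map size_iota.
Qed.

Lemma compl_raw_sorted n m l : sorted (fun x y => y <= x) l ->
  sorted (fun x y => y <= x) [seq m - nth 0 l (n - 1 - i) | i <- iota 0 n].
Proof.
move=> hl; apply: sorted_nth_geq => k; rewrite !nth_compl_raw.
case: (ltnP k.+1 n) => h1; last by [].
rewrite (ltnW h1); apply: leq_sub2l; apply: part_mono => //; lia.
Qed.

Lemma nth_compl n m l k : sorted (fun x y => y <= x) l ->
  nth 0 (compl n m l) k = if k < n then m - nth 0 l (n - 1 - k) else 0.
Proof. move=> hl; by rewrite /compl nth_filter_pos ?nth_compl_raw // compl_raw_sorted. Qed.

Lemma compl_part n m l : sorted (fun x y => y <= x) l -> is_partition (compl n m l).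
Proof.
move=> hl; apply/andP; split; last exact: filter_all.
apply: sorted_filter; [exact: geq_trans | exact: compl_raw_sorted].
Qed.

Lemma box_sorted n m : sorted (fun x y => y <= x) (box n m).
Proof.
apply: sorted_nth_geq => k; rewrite !nth_box.
case: (ltnP k.+1 n) => h; first by rewrite (ltnW h).
by [].
Qed.

Lemma nth_N a b c d i : nth 0 (compl (a + c) (b + d) (box c d)) i = U a b c d i.
Proof.
rewrite nth_compl ?box_sorted // nth_box /U.
case: (ltnP i (a + c)) => h1; case: (ltnP i a) => h2; case: (ltnP (a + c - 1 - i) c) => h3; lia.
Qed.

Lemma nth_padd m n i : nth 0 (padd m n) i = nth 0 m i + nth 0 n i.
Proof.
rewrite /padd; case: (ltnP i (maxn (size m) (size n))) => h; first by rewrite nth_mkseq.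
rewrite !nth_default // ?size_mkseq //; move: h; rewrite geq_max => /andP[] //.
Qed.

Lemma count_one (s : seq (seq (seq nat))) (p : pred (seq (seq nat))) x :
  uniq s -> x \in s -> p x -> (forall y, y \in s -> p y -> y = x) -> count p s = 1.
Proof.
move=> hu hx hp hy.
rewrite (@eq_in_count _ p (pred1 x)); first by rewrite count_uniq_mem // hx.
move=> y hys /=; apply/idP/eqP; [exact: hy | by move->].
Qed.

Lemma uniq_words k n : uniq (words k n).
Proof.
elim: k => [|k IH] //=; apply: allpairs_uniq => //; first exact: iota_uniq.
by move=> [x1 w1] [x2 w2] _ _ /= [-> ->].
Qed.

Lemma uniq_fillings rs n : uniq (fillings rs n).
Proof.
elim: rs => [|r rs IH] //=; apply: allpairs_uniq => //; first exact: uniq_words.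
by move=> [x1 w1] [x2 w2] _ _ /= [-> ->].
Qed.

Lemma sumU a b c d : \sum_(0 <= i < a + c) U a b c d i = a * d + a * b + c * b.
Proof.
rewrite (big_cat_nat (n := a)) //=; last exact: leq_addr.
have -> : \sum_(0 <= i < a) U a b c d i = \sum_(0 <= i < a) (b + d).
  by apply: eq_big_nat => i /andP[_ h]; rewrite /U h.
have -> : \sum_(a <= i < a + c) U a b c d i = \sum_(a <= i < a + c) b.
  by apply: eq_big_nat => i /andP[h1 h2]; rewrite /U ltnNge h1 /= h2.
rewrite !sum_nat_const_nat subn0 addKn; nia.
Qed.

Section Analysis.
Variables (a b c d : nat) (kap lam nu : seq nat) (T : seq (seq nat)).
Hypotheses (hkp : is_partition kap) (hnp : is_partition nu)
  (hnb : subpart nu (box (a + c) (b + d))) (hka : size kap <= a) (hlb : nth 0 lam 0 <= b)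
  (hLR : LR_tableau kap lam nu T).

Lemma kap0 i : a <= i -> nth 0 kap i = 0.
Proof. move=> h; rewrite nth_default //; exact: leq_trans hka h. Qed.

Lemma nu_le_U i : nth 0 nu i <= U a b c d i.
Proof.
have := row_bound hLR i; move/subpartP: hnb => /(_ i); rewrite nth_box /U.
case: (ltnP i a) => h1.
- by rewrite (leq_trans h1 (leq_addr _ _)).
- rewrite kap0 //; case: ifP => //; lia.
Qed.

Lemma size_nu : size nu <= a + c.
Proof.
apply: leq_trans (size_box (a + c) (b + d)); apply: size_le => //; by case/andP: hnp.
Qed.

Lemma analysis : sumn kap + sumn lam <= a * d + a * b + c * b /\
  (sumn kap + sumn lam = a * d + a * b + c * b -> nu = compl (a + c) (b + d) (box c d)).
Proof.
rewrite -(sum_sizes hLR hkp) (sumn_nth size_nu) -sumU.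
have hle : \sum_(0 <= i < a + c) nth 0 nu i <= \sum_(0 <= i < a + c) U a b c d i.
  by apply: leq_sum => i _; exact: nu_le_U.
split => // heq.
have ht := sum_eq_termwise nu_le_U heq.
apply: pos_nth_eq; first by case/andP: hnp.
  by case/andP: (compl_part (a + c) (b + d) (box_sorted c d)).
move=> i; rewrite nth_N.
case: (ltnP i (a + c)) => hi.
- apply: ht; by rewrite mem_index_iota.
- rewrite nth_default; last exact: leq_trans size_nu hi.
  have h1 : (i < a) = false by apply/negbTE; rewrite -leqNgt; lia.
  have h2 : (i < a + c) = false by apply/negbTE; rewrite -leqNgt; lia.
  by rewrite /U h1 h2.
Qed.

End Analysis.

Section NCase.
Variables (a b c d : nat) (kap lam : seq nat).
Hypotheses (hkp : is_partition kap) (hlp : is_partition lam)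
  (hkb : subpart kap (box (a + c) (b + d))) (hka : size kap <= a) (hlb : nth 0 lam 0 <= b).
Let N := compl (a + c) (b + d) (box c d).

Lemma N_part : is_partition N.
Proof. exact: compl_part (box_sorted c d). Qed.

Lemma size_N_lt i : (i < size N) = (0 < U a b c d i).
Proof. rewrite -nth_N; apply: pos_size; by case/andP: N_part. Qed.

Lemma kap0' i : a <= i -> nth 0 kap i = 0.
Proof. move=> h; rewrite nth_default //; exact: leq_trans hka h. Qed.

Section T.
Variable T : seq (seq nat).
Hypothesis hLR : LR_tableau kap lam N T.

Lemma rows_size j : size (nth [::] T j) = U a b c d j - nth 0 kap j.
Proof.
case: (ltnP j (size N)) => h.
- by rewrite (LR_rows hLR) // nth_N.
- rewrite nth_default ?(LR_size hLR) //.
  move: h; rewrite leqNgt size_N_lt lt0n negbK => /eqP -> //.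
Qed.

Lemma H_holds i : i < size T -> P T i.+1 1 <= size (nth [::] T i).
Proof.
rewrite (LR_size hLR) => hi; rewrite rows_size.
case: (ltnP i a) => hia.
- have := ones_bound hLR hkp N_part hi; rewrite nth_N.
  have -> : U a b c d 0 = b + d by rewrite /U; case: a hia.
  by rewrite /U hia.
- have := P_le_total T i.+1 1; rewrite (LR_content hLR 0) => h.
  have hia' : (i < a) = false by rewrite ltnNge hia.
  have := hi; rewrite size_N_lt /U hia' kap0' //.
  case: ifP => // _ _; rewrite subn0; lia.
Qed.

Lemma formulaN i v : i <= size N ->
  P T i v = if (0 < v) && (v <= i) then U a b c d (i - v) - nth 0 kap (i - v) else 0.
Proof.
move=> hi; rewrite (formula hLR H_holds) ?(LR_size hLR) //.
by case: ifP => // _; rewrite rows_size.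
Qed.

Lemma row_count i v : i < size N -> count_mem v (nth [::] T i) = P T i.+1 v - P T i v.
Proof. move=> hi; by rewrite P_succ ?(LR_size hLR) // addKn. Qed.

Lemma kap_ge_d i : i < a -> d <= nth 0 kap i.
Proof.
move=> hi; have := row_bound hLR i; rewrite nth_N /U hi; lia.
Qed.

Lemma lam_nth k : nth 0 lam k = if k < size N then U a b c d (size N - k.+1) - nth 0 kap (size N - k.+1) else 0.
Proof.
rewrite -(LR_content hLR) -(P_full T) (LR_size hLR) formulaN //=.
Qed.

End T.

Lemma uniqueN T1 T2 : LR_tableau kap lam N T1 -> LR_tableau kap lam N T2 -> T1 = T2.
Proof.
move=> h1 h2.
apply: (@eq_from_nth _ [::]); first by rewrite (LR_size h1) (LR_size h2).
move=> i; rewrite (LR_size h1) => hi.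
apply: (sorted_eq leq_trans anti_leq); [exact: (LR_sorted h1 i) | exact: (LR_sorted h2 i) |].
apply/allP => x _ /=; apply/eqP.
rewrite (row_count h1) // (row_count h2) // !(formulaN h1) ?(formulaN h2) //; exact: ltnW.
Qed.

End NCase.

Lemma alpha_part a b c d kap lam T :
  is_partition kap -> is_partition lam -> subpart kap (box (a + c) (b + d)) ->
  size kap <= a -> nth 0 lam 0 <= b ->
  LR_tableau kap lam (compl (a + c) (b + d) (box c d)) T ->
  exists alpha, [/\ is_partition alpha, subpart alpha (box a b),
                    kap = padd (box a d) alpha &
                    lam = pcat (box c b) (compl a b alpha)].
Proof.
move=> hkp hlp hkb hka hl0 hT.
have hks : sorted (fun x y => y <= x) kap by case/andP: hkp.
have hmap : sorted (fun x y => y <= x) [seq x - d | x <- kap].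
  by apply: homo_sorted hks => x y h; exact: leq_sub2r.
set alpha := [seq x <- [seq x - d | x <- kap] | 0 < x].
have nal : forall j, nth 0 alpha j = nth 0 kap j - d.
  move=> j; rewrite /alpha nth_filter_pos //.
  case: (ltnP j (size kap)) => h; first by rewrite (nth_map 0).
  by rewrite !nth_default ?size_map.
have hge : forall i, i < a -> d <= nth 0 kap i by move=> i; apply: (kap_ge_d hkp hlp hkb hka hl0 hT).
have hk0 : forall i, a <= i -> nth 0 kap i = 0 by move=> i; apply: (kap0' hka).
have hap : is_partition alpha.
  apply/andP; split; [exact: sorted_filter geq_trans _ _ hmap | exact: filter_all].
have hapos : all (fun x => 0 < x) alpha by case/andP: hap.
have hals : sorted (fun x y => y <= x) alpha by case/andP: hap.
exists alpha; split => //.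
- apply/subpartP => i; rewrite nal nth_box; move/subpartP: hkb => /(_ i); rewrite nth_box.
  case: (ltnP i a) => h.
  + rewrite (leq_trans h (leq_addr _ _)); lia.
  + by rewrite hk0.
- apply: pos_nth_eq; first by case/andP: hkp.
  + apply: all_pos_nth => i; rewrite nth_padd /padd size_mkseq leq_max => /orP[h|h].
    * move: h; rewrite nth_box; case hd: d => [|d'] //= h.
      rewrite size_nseq in h; rewrite h; lia.
    * move: h; rewrite (pos_size _ hapos); lia.
  + move=> i; rewrite nth_padd nal nth_box.
    case: (ltnP i a) => h; [have := hge i h; lia | by rewrite hk0].
- set L := box c b ++ compl a b alpha.
  have nL : forall k, nth 0 L k =
      if k < c then b else if k < a + c then b - (nth 0 kap (a + c - 1 - k) - d) else 0.
    move=> k; rewrite /L nth_cat; case hb: b => [|b'] /=.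
    * by rewrite nth_compl // !sub0n subn0 !if_same.
    * rewrite size_nseq nth_nseq; case: (ltnP k c) => h1 //.
      rewrite nth_compl // nal.
      case: (ltnP (k - c) a) => h2; case: (ltnP k (a + c)) => h3; try lia.
      have -> : a - 1 - (k - c) = a + c - 1 - k by lia.
      by [].
  have hLs : sorted (fun x y => y <= x) L.
    apply: sorted_nth_geq => k; rewrite !nL.
    have hm : nth 0 kap (a + c - 1 - k) <= nth 0 kap (a + c - 1 - k.+1) by apply: part_mono; lia.
    case: (ltnP k.+1 c); case: (ltnP k c); case: (ltnP k.+1 (a + c)); case: (ltnP k (a + c)); lia.
  rewrite /pcat sorted_sort //; last exact: geq_trans.
  apply: pos_nth_eq; first by case/andP: hlp.
  + rewrite all_cat; apply/andP; split; last exact: filter_all.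
    case: (b) => [|b'] //=; rewrite all_nseq orbT //.
  + move=> k; rewrite nL.
    case: (posnP b) => hb.
    * have : nth 0 lam k <= nth 0 lam 0 by apply: part_mono => //; case/andP: hlp.
      rewrite hb in hl0 *; move=> hk; have -> : nth 0 lam k = 0 by lia.
      case: ifP => // _; case: ifP => // _; lia.
    * have hiff : forall i, (i < size (compl (a + c) (b + d) (box c d))) = (i < a + c).
        move=> i; rewrite size_N_lt /U; case: (ltnP i a); case: (ltnP i (a + c)); lia.
      have hsN : size (compl (a + c) (b + d) (box c d)) = a + c.
        have h1 := hiff (size (compl (a + c) (b + d) (box c d))).
        have h2 := hiff (a + c).
        rewrite ltnn in h1 h2.
        move: h1 => /esym/negbT; rewrite -leqNgt => h1.
        move: h2; rewrite ltnn => /negbT; rewrite -leqNgt => h2.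
        by apply/eqP; rewrite eqn_leq h1 h2.
      rewrite (lam_nth hkp hlp hkb hka hl0 hT) hsN.
      have -> : a + c - 1 - k = a + c - k.+1 by lia.
      case: (ltnP k c) => h1.
      - have h2 : k < a + c by lia.
        rewrite h2 /U hk0; last by lia.
        have -> : (a + c - k.+1 < a) = false by apply/negbTE; rewrite -leqNgt; lia.
        have -> : a + c - k.+1 < a + c by lia.
        by rewrite subn0.
      - case: (ltnP k (a + c)) => h2 //.
        have h3 : a + c - k.+1 < a by lia.
        have := hge _ h3; rewrite /U h3; lia.
Qed.

Lemma cup_nz n m kap lam nu : cup n m kap lam nu != 0 ->
  [/\ is_partition nu, subpart nu (box n m) &
   exists2 T, T \in fillings [seq nth 0 nu i - nth 0 kap i | i <- iota 0 (size nu)] (size lam)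
            & LR_tableau kap lam nu T].
Proof.
rewrite /cup; case: ifP => // /andP[h1 h2]; rewrite /LRcoef; case: ifP => // _.
rewrite -lt0n -has_count => /hasP[T hT hL]; split => //; by exists T.
Qed.

Unset Implicit Arguments.

Theorem lemma2p3 (a b c d : nat) (kap lam : seq nat) :
  is_partition kap -> is_partition lam ->
  subpart kap (box (a + c) (b + d)) -> subpart lam (box (a + c) (b + d)) ->
  size kap <= a -> nth 0 lam 0 <= b ->
  (a * d + a * b + c * b < psize kap + psize lam ->
     forall nu, cup (a + c) (b + d) kap lam nu = 0)
  /\
  (psize kap + psize lam = a * d + a * b + c * b ->
   (exists nu, cup (a + c) (b + d) kap lam nu != 0) ->
     (forall nu, cup (a + c) (b + d) kap lam nu
                 = sigma (a + c) (b + d) (compl (a + c) (b + d) (box c d)) nu)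
     /\ exists alpha, [/\ is_partition alpha, subpart alpha (box a b),
                          kap = padd (box a d) alpha &
                          lam = pcat (box c b) (compl a b alpha)]).
Proof.
move=> hkp hlp hkb _ hka hl0; rewrite /psize.
split.
- move=> hgt nu; apply/eqP; apply/negPn/negP => hnz.
  have [hnp hnb [T _ hT]] := cup_nz hnz.
  have [hle _] := analysis hkp hnp hnb hka hl0 hT; lia.
- move=> heq [nu0 hnz].
  have [hnp hnb [T0 hT0in hT0]] := cup_nz hnz.
  have [_ hN] := analysis hkp hnp hnb hka hl0 hT0.
  move: (hN heq) => e0; subst nu0.
  split; last exact: (alpha_part hkp hlp hkb hka hl0 hT0).
  move=> nu; rewrite /sigma.
  have hNb : subpart (compl (a + c) (b + d) (box c d)) (box (a + c) (b + d)).
    apply/subpartP => i; rewrite nth_N nth_box /U.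
    case: (ltnP i a) => h1; case: (ltnP i (a + c)) => h2; lia.
  rewrite hNb andbT.
  case: eqP => [->|hne].
  + rewrite /cup N_part hNb /= /LRcoef (LR_sub hT0) /=.
    have hT0c := hT0; apply: count_one (uniq_fillings _ _) hT0in hT0c _ => T _ hT.
    exact: (uniqueN hkp hlp hkb hka hl0 hT hT0).
  + apply/eqP; apply/negPn/negP => hnz'.
    have [hnp' hnb' [T' _ hT']] := cup_nz hnz'.
    have [_ hN'] := analysis hkp hnp' hnb' hka hl0 hT'.
    exact: hne (hN' heq).
Qed.
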